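(* For every positive integer $n$, the lattice $\widetilde\Pi(D_n)$ does not contain a sublattice isomorphic to the diamond lattice $M_3$.
   Context: For a positive integer $n$, $D_n=\langle r,s\mid r^n=e,\ s^2=e,\ srs^{-1}=r^{-1}\rangle$ is the dihedral group of order $2n$. For a finite group $G$ and a subgroup $H\le G$, let $\pi_e(H)=\{o(x)\mid x\in H\}$. Let $\mathcal{L}(G)$ be the set of subgroups of $G$; define $H_1\equiv H_2$ iff $\pi_e(H_1)=\pi_e(H_2)$, with class $[H]$. The poset $\widetilde\Pi(G)$ is $\mathcal{L}(G)/\!\equiv$ ordered by $[H_1]\lesssim[H_2]$ iff $\pi_e(H_1)\subseteq\pi_e(H_2)$; for $G=D_n$ it is a lattice. $M_3$ is the five-element lattice consisting of a bottom, a top, and three pairwise incomparable elements between them. *)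

(* Defs.v *)
From mathcomp Require Import all_boot all_fingroup.
Set Implicit Arguments.
Unset Strict Implicit.
Unset Printing Implicit Defensive.
Local Open Scope group_scope.

Section PiTilde.
Variable gT : finGroupType.

Definition pie (H : {set gT}) : pred nat := fun k => [exists x in H, #[x] == k].

Definition pi_le (H K : {set gT}) : Prop := {subset pie H <= pie K}.

Definition pi_eq (H K : {set gT}) : Prop := pie H =i pie K.

Definition pi_join (G : {group gT}) (A B C : {group gT}) : Prop :=
  [/\ C \subset G, pi_le A C, pi_le B C &
      forall K : {group gT}, K \subset G -> pi_le A K -> pi_le B K -> pi_le C K].

Definition pi_meet (G : {group gT}) (A B C : {group gT}) : Prop :=
  [/\ C \subset G, pi_le C A, pi_le C B &
      forall K : {group gT}, K \subset G -> pi_le K A -> pi_le K B -> pi_le K C].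

Definition has_M3_sublattice (G : {group gT}) : Prop :=
  exists B X1 X2 X3 T : {group gT},
    [/\ [/\ B \subset G, X1 \subset G, X2 \subset G, X3 \subset G & T \subset G],
        [/\ ~ pi_eq X1 X2, ~ pi_eq X1 X3 & ~ pi_eq X2 X3],
        [/\ pi_join G X1 X2 T, pi_join G X1 X3 T & pi_join G X2 X3 T] &
        [/\ pi_meet G X1 X2 B, pi_meet G X1 X3 B & pi_meet G X2 X3 B]].

End PiTilde.

(* Main.v *)
Require Import Defs.
From mathcomp Require Import all_boot all_fingroup.
From mathcomp Require Import all_solvable.
Local Open Scope group_scope.

Local Open Scope nat_scope.
Definition P (p : nat * bool) : pred nat := [pred k | (k %| p.1) || (p.2 && (k == 2))].
Definition le p q := {subset P p <= P q}.
Definition okp (q : nat * bool) := [&& 0 < q.1, q.1 != 2 & (2 %| q.1) ==> q.2].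

Lemma dvdn2_cases k : k %| 2 -> (k == 1) || (k == 2).
Proof. by case: k => [|[|[|k]]] //; rewrite gtnNdvd. Qed.

Lemma canon p : 0 < p.1 -> exists q, [/\ okp q, q.1 %| p.1 & P p =i P q].
Proof.
case: p => d b /= d0; case: (eqVneq d 2) => [->|ne].
  exists (1, true); split => // k; rewrite !inE /= dvdn1.
  case: k => [|[|[|k]]] //=; try by rewrite andbF.
exists (d, b || (2 %| d)); split => //.
  by rewrite /okp /= d0 ne /=; apply/implyP => ->; rewrite orbT.
move=> k; rewrite !inE /=; case: (eqVneq k 2) => [->|]; last by rewrite !andbF.
by case: b; case: (2 %| d).
Qed.

Lemma le_ok q q' : okp q -> okp q' -> le q q' <-> (q.1 %| q'.1) && (q.2 ==> q'.2).
Proof.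
case: q q' => [g c] [g' c'] /and3P[/= g0 g2 gc] /and3P[/= g0' g2' gc']; split.
  move=> h; have := h g; rewrite !inE /= dvdnn => /(_ isT) /orP[-> /=|/andP[_ e]]; last by rewrite e in g2.
  apply/implyP => cc; have := h 2; rewrite !inE /= cc eqxx orbT => /(_ isT).
  by case/orP=> [d2|/andP[]//]; exact: (implyP gc').
case/andP=> dg cc k; rewrite !inE /= => /orP[kg|/andP[ck ->]].
  by rewrite (dvdn_trans kg dg).
by rewrite (implyP cc ck) orbT.
Qed.

Definition J N qi qj qT := [/\ le qi qT, le qj qT &
  forall r, okp r -> r.1 %| N -> le qi r -> le qj r -> le qT r].
Definition M N qi qj qB := [/\ le qB qi, le qB qj &
  forall r, okp r -> r.1 %| N -> le r qi -> le r qj -> le r qB].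

Lemma join_val N qi qj qT : okp qi -> okp qj -> okp qT -> qi.1 %| N -> qj.1 %| N ->
  J N qi qj qT -> qT = (lcmn qi.1 qj.1, qi.2 || qj.2).
Proof.
move=> oi oj oT Ni Nj [hi hj hu].
move: (oi) (oj) => /and3P[gi0 gi2 gic] /and3P[gj0 gj2 gjc].
move/le_ok: hi => /(_ oi oT) /andP[di ci].
move/le_ok: hj => /(_ oj oT) /andP[dj cj].
have oL : okp (lcmn qi.1 qj.1, qi.2 || qj.2).
  rewrite /okp /= lcmn_gt0 gi0 gj0 /=; apply/andP; split.
    apply/eqP => L2.
    have := dvdn_lcml qi.1 qj.1; rewrite L2 => /dvdn2_cases; rewrite (negbTE gi2) orbF => /eqP g1.
    have := dvdn_lcmr qi.1 qj.1; rewrite L2 => /dvdn2_cases; rewrite (negbTE gj2) orbF => /eqP g1'.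
    by move: L2; rewrite g1 g1'.
  apply/implyP => d2.
  have : 2 %| qi.1 * qj.1 by rewrite (dvdn_trans d2) // dvdn_lcm dvdn_mulr ?dvdn_mull.
  rewrite Euclid_dvdM // => /orP[/(implyP gic) -> //|/(implyP gjc) ->]; by rewrite orbT.
have hiL : le qi (lcmn qi.1 qj.1, qi.2 || qj.2).
  by apply/le_ok => //=; rewrite dvdn_lcml; apply/implyP => ->.
have hjL : le qj (lcmn qi.1 qj.1, qi.2 || qj.2).
  by apply/le_ok => //=; rewrite dvdn_lcmr; apply/implyP => ->; rewrite orbT.
have := hu _ oL; rewrite /= dvdn_lcm Ni Nj => /(_ isT hiL hjL).
move/le_ok => /(_ oT oL) /andP[dT cT].
clear hu; case: qT oT di dj ci cj dT cT => gT cT' /= _ di dj ci cj dT cT.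
congr (_, _); first by apply/eqP; rewrite eqn_dvd dT dvdn_lcm di dj.
by move: ci cj cT; case: (qi.2); case: (qj.2); case: cT'.
Qed.

Lemma meet_val N qi qj qB : okp qi -> okp qj -> okp qB -> qi.1 %| N ->
  M N qi qj qB -> qB.2 = qi.2 && qj.2 /\
     ((gcdn qi.1 qj.1 == qB.1) || (gcdn qi.1 qj.1 == 2)).
Proof.
move=> oi oj oB Ni [hi hj hu].
move: (oi) (oj) (oB) => /and3P[gi0 gi2 gic] /and3P[gj0 gj2 gjc] /and3P[gB0 gB2 gBc].
move/le_ok: hi => /(_ oB oi) /andP[di ci].
move/le_ok: hj => /(_ oB oj) /andP[dj cj].
pose gc := if gcdn qi.1 qj.1 == 2 then 1 else gcdn qi.1 qj.1.
have oC : okp (gc, qi.2 && qj.2).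
  rewrite /okp /= /gc; case: ifP => [_//|ne]; rewrite gcdn_gt0 gi0 ne /=.
  apply/implyP => d2; move: (dvdn_trans d2 (dvdn_gcdl qi.1 qj.1)) (dvdn_trans d2 (dvdn_gcdr qi.1 qj.1)).
  by move=> /(implyP gic) -> /(implyP gjc) ->.
have gci : gc %| qi.1 by rewrite /gc; case: ifP => _; rewrite ?dvd1n ?dvdn_gcdl.
have gcj : gc %| qj.1 by rewrite /gc; case: ifP => _; rewrite ?dvd1n ?dvdn_gcdr.
have hCi : le (gc, qi.2 && qj.2) qi.
  by apply/le_ok => //=; rewrite gci; apply/implyP => /andP[].
have hCj : le (gc, qi.2 && qj.2) qj.
  by apply/le_ok => //=; rewrite gcj; apply/implyP => /andP[].
have := hu _ oC; rewrite /= (dvdn_trans gci Ni) => /(_ isT hCi hCj).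
move/le_ok => /(_ oC oB) /andP[dB cB].
split; first by move: ci cj cB; case: (qi.2); case: (qj.2); case: (qB.2).
have dg : qB.1 %| gcdn qi.1 qj.1 by rewrite dvdn_gcd di dj.
move: dB; rewrite /gc; case: (eqVneq (gcdn qi.1 qj.1) 2) => [-> _|_ dB]; first by rewrite orbT.
by rewrite eqn_dvd dg dB.
Qed.

Lemma final (g1 g2 g3 gB gT : nat) : 0 < g1 -> 0 < g2 -> 0 < g3 ->
  g1 != g2 -> g1 != g3 -> g2 != g3 ->
  lcmn g1 g2 = gT -> lcmn g1 g3 = gT -> lcmn g2 g3 = gT ->
  (gcdn g1 g2 == gB) || (gcdn g1 g2 == 2) ->
  (gcdn g1 g3 == gB) || (gcdn g1 g3 == 2) ->
  (gcdn g2 g3 == gB) || (gcdn g2 g3 == 2) -> False.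
Proof.
move=> p1 p2 p3 n12 n13 n23 l12 l13 l23 e12 e13 e23.
have m12 := muln_lcm_gcd g1 g2; have m13 := muln_lcm_gcd g1 g3; have m23 := muln_lcm_gcd g2 g3.
rewrite l12 in m12; rewrite l13 in m13; rewrite l23 in m23.
have a : gcdn g1 g2 != gcdn g1 g3.
  by apply/eqP => h; move: n23; rewrite -(eqn_pmul2l p1) -m12 -m13 h eqxx.
have b : gcdn g1 g2 != gcdn g2 g3.
  by apply/eqP => h; move: n13; rewrite -(eqn_pmul2l p2) [g2 * g1]mulnC -m12 -m23 h eqxx.
have c : gcdn g1 g3 != gcdn g2 g3.
  by apply/eqP => h; move: n12; rewrite -(eqn_pmul2r p3) -m13 -m23 h eqxx.
move: a b c; case/orP: e12 => /eqP->; case/orP: e13 => /eqP->; case/orP: e23 => /eqP->;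
  by rewrite ?eqxx.
Qed.

Definition JJ N qi qj qT := [/\ le qi qT, le qj qT &
  forall r, r.1 %| N -> le qi r -> le qj r -> le qT r].
Definition MM N qi qj qB := [/\ le qB qi, le qB qj &
  forall r, r.1 %| N -> le r qi -> le r qj -> le r qB].

Lemma le_eq p p' q q' : P p =i P q -> P p' =i P q' -> le p p' -> le q q'.
Proof. by move=> e e' h k; rewrite -e -e'; apply: h. Qed.

Lemma core N (pB p1 p2 p3 pT : nat * bool) : 0 < N ->
  pB.1 %| N -> p1.1 %| N -> p2.1 %| N -> p3.1 %| N -> pT.1 %| N ->
  ~ (P p1 =i P p2) -> ~ (P p1 =i P p3) -> ~ (P p2 =i P p3) ->
  JJ N p1 p2 pT -> JJ N p1 p3 pT -> JJ N p2 p3 pT ->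
  MM N p1 p2 pB -> MM N p1 p3 pB -> MM N p2 p3 pB -> False.
Proof.
move=> N0 dB d1 d2 d3 dT n12 n13 n23 j12 j13 j23 m12 m13 m23.
have cn p : p.1 %| N -> exists q, [/\ okp q, q.1 %| N & P p =i P q].
  move=> dp; have [q [oq dq e]] := canon p (dvdn_gt0 N0 dp).
  by exists q; split => //; apply: dvdn_trans dq dp.
have [qB [oB NB eB]] := cn _ dB.
have [q1 [o1 N1 e1]] := cn _ d1.
have [q2 [o2 N2 e2]] := cn _ d2.
have [q3 [o3 N3 e3]] := cn _ d3.
have [qT [oT NT eT]] := cn _ dT.
have sym p q : P p =i P q -> P q =i P p by move=> e k; rewrite e.
have rfl p : P p =i P p by [].
have tJ pi pj qi qj : P pi =i P qi -> P pj =i P qj -> JJ N pi pj pT -> J N qi qj qT.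
  move=> ei ej [hi hj hu]; split; first exact: le_eq hi.
    exact: le_eq hj.
  move=> r _ dr hir hjr; apply: le_eq (hu r dr _ _) => //.
    exact: le_eq (sym _ _ ei) (rfl r) hir.
  exact: le_eq (sym _ _ ej) (rfl r) hjr.
have tM pi pj qi qj : P pi =i P qi -> P pj =i P qj -> MM N pi pj pB -> M N qi qj qB.
  move=> ei ej [hi hj hu]; split; first exact: le_eq hi.
    exact: le_eq hj.
  move=> r _ dr hir hjr; apply: le_eq (hu r dr _ _) => //.
    exact: le_eq (rfl r) (sym _ _ ei) hir.
  exact: le_eq (rfl r) (sym _ _ ej) hjr.
have J12 := join_val N _ _ _ o1 o2 oT N1 N2 (tJ _ _ _ _ e1 e2 j12).
have J13 := join_val N _ _ _ o1 o3 oT N1 N3 (tJ _ _ _ _ e1 e3 j13).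
have J23 := join_val N _ _ _ o2 o3 oT N2 N3 (tJ _ _ _ _ e2 e3 j23).
have [c12 g12] := meet_val N _ _ _ o1 o2 oB N1 (tM _ _ _ _ e1 e2 m12).
have [c13 g13] := meet_val N _ _ _ o1 o3 oB N1 (tM _ _ _ _ e1 e3 m13).
have [c23 g23] := meet_val N _ _ _ o2 o3 oB N2 (tM _ _ _ _ e2 e3 m23).
have ne pi pj qi qj : P pi =i P qi -> P pj =i P qj -> ~ (P pi =i P pj) -> qi != qj.
  by move=> ei ej n; apply/eqP => eq; apply: n => k; rewrite ei ej eq.
have q12 := ne _ _ _ _ e1 e2 n12; have q13 := ne _ _ _ _ e1 e3 n13.
have q23 := ne _ _ _ _ e2 e3 n23.
move: (o1) (o2) (o3) => /and3P[g10 _ _] /and3P[g20 _ _] /and3P[g30 _ _].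
case: q1 o1 N1 e1 J12 J13 c12 c13 g12 g13 q12 q13 g10 => a1 b1 /= _ _ _ J12 J13 c12 c13 g12 g13 q12 q13 g10.
case: q2 o2 N2 e2 J12 J23 c12 c23 g12 g23 q12 q23 g20 => a2 b2 /= _ _ _ J12 J23 c12 c23 g12 g23 q12 q23 g20.
case: q3 o3 N3 e3 J13 J23 c13 c23 g13 g23 q13 q23 g30 => a3 b3 /= _ _ _ J13 J23 c13 c23 g13 g23 q13 q23 g30.
have bb : (b1 = b2) /\ (b1 = b3).
  have t12 : qT.2 = b1 || b2 by rewrite J12.
  have t13 : qT.2 = b1 || b3 by rewrite J13.
  have t23 : qT.2 = b2 || b3 by rewrite J23.
  clear -t12 t13 t23 c12 c13 c23.
  move: t12 t13 t23 c12 c13 c23; case: (qT.2); case: (qB.2);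
  by case: b1; case: b2; case: b3.
case: bb => eb12 eb13; rewrite -eb12 -eb13 in q12 q13 q23 J12 J13 J23.
rewrite !xpair_eqE !eqxx !andbT in q12 q13 q23.
have e13 : lcmn a1 a3 = lcmn a1 a2 by rewrite -[RHS]/((lcmn a1 a2, b1 || b1).1) -J12 J13.
have e23 : lcmn a2 a3 = lcmn a1 a2 by rewrite -[RHS]/((lcmn a1 a2, b1 || b1).1) -J12 J23.
exact: (final _ _ _ _ _ g10 g20 g30 q12 q13 q23 erefl e13 e23 g12 g13 g23).
Qed.

Local Open Scope group_scope.

Section Dih.
Variables (gT : finGroupType) (x y : gT).
Hypotheses (y2 : y ^+ 2 = 1) (xy : x ^ y = x^-1) (yR : y \notin <[x]>).

Lemma yV : y^-1 = y.
Proof. by rewrite -[y^-1]mulg1 -y2 expgS expg1 mulKg. Qed.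

Lemma conjRy a : a \in <[x]> -> a ^ y = a^-1.
Proof. by case/cycleP=> k ->; rewrite conjXg xy expgVn. Qed.

Lemma nAy (A : {group gT}) : A \subset <[x]> -> <[y]> \subset 'N(A).
Proof.
move=> sAR; rewrite cycle_subG inE; apply/subsetP => w; rewrite mem_conjg => Aw.
rewrite -(conjgKV y w) conjRy ?groupV //; exact: (subsetP sAR).
Qed.

Lemma memAy {A : {group gT}} {z} : A \subset <[x]> -> z \in A <*> <[y]> ->
  z \in A \/ exists2 a, a \in A & z = a * y.
Proof.
move=> sAR; rewrite norm_joinEr ?nAy // => /mulsgP[a b Aa /cycleP[k ->] ->].
rewrite -(expg_mod _ y2); have : k %% 2 < 2 by rewrite ltn_pmod.
case: (k %% 2) => [|[|//]] _; first by left; rewrite mulg1.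
by right; exists a; rewrite ?expg1.
Qed.

Lemma ord2 (z : gT) : z ^+ 2 = 1 -> z != 1 -> #[z] = 2%N.
Proof.
move=> z2 nz; have : #[z] %| 2 by rewrite order_dvdn z2.
by case/dvdn2_cases/orP => /eqP // o1; move: nz; rewrite -order_eq1 o1.
Qed.

Lemma sq_ay a : a \in <[x]> -> (a * y) ^+ 2 = 1.
Proof.
move=> Ra; rewrite expgS expg1 -mulgA.
have -> : y * (a * y) = a ^ y by rewrite conjgE yV.
by rewrite conjRy // mulgV.
Qed.

Lemma ay_notR a : a \in <[x]> -> a * y \notin <[x]>.
Proof. by move=> Ra; apply: contra yR => Ray; rewrite -(mulKg a y) groupM ?groupV. Qed.

Lemma ord_ay a : a \in <[x]> -> #[a * y] = 2%N.
Proof.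
move=> Ra; apply: ord2; first exact: sq_ay.
by apply/eqP => e; move: (ay_notR a Ra); rewrite e group1.
Qed.

Lemma ord_y : #[y] = 2%N.
Proof. by rewrite -[y]mul1g ord_ay ?group1. Qed.

Lemma cyc_elt {A : {group gT}} {k} : A \subset <[x]> -> k %| #|A| ->
  exists2 w, w \in A & #[w] = k.
Proof.
move=> sAR kA; have /cyclicP[a defA] := cyclicS sAR (cycle_cyclic x).
have ka : k %| #[a] by rewrite orderE -defA.
have := set11 <[a ^+ (#[a] %/ k)]>%G; rewrite -(cycle_sub_group ka) inE.
case/andP => _ /eqP ok; exists (a ^+ (#[a] %/ k)); last by rewrite orderE.
by rewrite defA groupX // cycle_id.
Qed.

Lemma pie_cyc (A : {group gT}) : A \subset <[x]> -> pie A =i [pred k | k %| #|A|].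
Proof.
move=> sAR k; rewrite !inE /pie; apply/existsP/idP => [[z /andP[Az /eqP <-]]|kA].
  exact: order_dvdG.
by have [w Aw ow] := cyc_elt sAR kA; exists w; rewrite Aw ow eqxx.
Qed.

Lemma pie_refl (A : {group gT}) : A \subset <[x]> -> pie (A <*> <[y]>) =i P (#|A|, true).
Proof.
move=> sAR k; rewrite !inE /pie /=; apply/existsP/idP => [[z /andP[Az /eqP <-]]|].
  case: (memAy sAR Az) => [Az'|[a Aa ->]]; first by rewrite order_dvdG.
  by rewrite ord_ay ?(subsetP sAR) // eqxx orbT.
case/orP => [kA|/eqP ->].
  have [w Aw ow] := cyc_elt sAR kA; exists w; rewrite ow eqxx andbT.
  exact: (subsetP (joing_subl _ _)).
exists y; rewrite ord_y eqxx andbT; exact: (subsetP (joing_subr _ _)) (cycle_id y).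
Qed.

Lemma pie_H (H : {group gT}) : H \subset <[x]> <*> <[y]> ->
  pie H =i P (#|H :&: <[x]>|, ~~ (H \subset <[x]>)).
Proof.
move=> sHG k; rewrite !inE /pie /=; apply/existsP/idP => [[z /andP[Hz /eqP <-]]|].
  case Rz: (z \in <[x]>).
    by rewrite (@order_dvdG _ (H :&: <[x]>)%G) // inE Hz Rz.
  have Gz := subsetP sHG z Hz.
  case: (memAy (subxx _) Gz) => [Rz'|[a Ra ez]]; first by rewrite Rz' in Rz.
  have -> : #[z] = 2%N by rewrite ez ord_ay.
  rewrite eqxx andbT; apply/orP; right; apply/subsetPn; exists z => //; by rewrite Rz.
case/orP => [kA|/andP[/subsetPn[z Hz Rz] /eqP ->]].
  have [w Aw ow] := cyc_elt (subsetIr H _) kA; exists w; rewrite ow eqxx andbT.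
  by move: Aw; rewrite inE => /andP[].
exists z; rewrite Hz /=.
have Gz := subsetP sHG z Hz.
case: (memAy (subxx _) Gz) => [Rz'|[a Ra ez]]; first by rewrite Rz' in Rz.
by rewrite ez ord_ay.
Qed.

Lemma realize d b : d %| #[x] -> exists K : {group gT},
  K \subset <[x]> <*> <[y]> /\ pie K =i P (d, b).
Proof.
move=> dx; have := set11 <[x ^+ (#[x] %/ d)]>%G; rewrite -(cycle_sub_group dx) inE.
case/andP => sAR /eqP oA.
case: b.
  exists (<[x ^+ (#[x] %/ d)]> <*> <[y]>)%G; split.
    by rewrite join_subG (subset_trans sAR (joing_subl _ _)) joing_subr.
  by move=> k; rewrite pie_refl // oA.
exists <[x ^+ (#[x] %/ d)]>%G; split; first exact: subset_trans sAR (joing_subl _ _).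
by move=> k; rewrite pie_cyc // !inE /= oA orbF.
Qed.
End Dih.

Lemma tr {gT : finGroupType} {A C : {set gT}} {pa pc} :
  pie A =i P pa -> pie C =i P pc -> pi_le A C <-> le pa pc.
Proof.
move=> ea ec; split => h k.
  by rewrite -ea -ec; apply: h.
by rewrite ea ec; apply: h.
Qed.

Theorem theorem2p8 (n : nat) (gT : finGroupType) (G : {group gT}) :
  0 < n ->
  G \isog Grp (r : s : r ^+ n, s ^+ 2, r ^ s = r^-1) ->
  ~ has_M3_sublattice G.
Proof.
move=> n0 iso [B [X1 [X2 [X3 [T [[sB s1 s2 s3 sT] [n12 n13 n23] [j12 j13 j23] [m12 m13 m23]]]]]]].
have := isoGrp_hom iso.
case/existsP => -[x y] /=; rewrite !xpair_eqE.
move=> /and4P[/eqP eG /eqP xn /eqP y2 /eqP xy].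
case: (boolP (y \in <[x]>)) => [yR|yR].
  have eGR : G :=: <[x]>.
    by rewrite -eG; apply/joing_idPl; rewrite cycle_subG.
  have oG : #|G| <= n.
    by rewrite eGR -orderE dvdn_leq // order_dvdn xn.
  case: (ltngtP n 1) => [|n1|n1].
  - by rewrite ltnNge n0.
  - have : 'D_(n.*2) \homg G by rewrite iso; rewrite -(Grp_dihedral n1) homg_refl.
    move/card_homg; rewrite card_dihedral // => /(dvdn_leq (cardG_gt0 G)).
    by move=> h; move: (leq_trans h oG); rewrite -addnn -[X in _ <= X](addn0 n) leq_add2l leqn0 => /eqP n00; rewrite n00 in n0.
  - have x1 : x = 1 by rewrite -xn n1 expg1.
    have G1 : G \subset [1 gT] by rewrite eGR x1 cycle1.
    have /trivGP e1 := subset_trans s1 G1.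
    have /trivGP e2 := subset_trans s2 G1.
    by apply: n12 => k; rewrite e1 e2.
have sHG (H : {group gT}) : H \subset G -> H \subset <[x]> <*> <[y]> by rewrite eG.
pose N := #[x].
have N0 : 0 < N := order_gt0 x.
pose pp (H : {group gT}) := (#|H :&: <[x]>|, ~~ (H \subset <[x]>)).
have eH (H : {group gT}) : H \subset G -> pie H =i P (pp H).
  by move=> sH; apply: (@pie_H _ _ _ y2 xy yR); apply: sHG.
have dH (H : {group gT}) : (pp H).1 %| N.
  by rewrite /= /N orderE cardSg // subsetIr.
have tJ (A C D : {group gT}) : A \subset G -> C \subset G -> D \subset G ->
   pi_join G A C D -> JJ N (pp A) (pp C) (pp D).
  move=> sA sC sD [_ hA hC hu]; split.
  - by apply/(tr (eH _ sA) (eH _ sD)).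
  - by apply/(tr (eH _ sC) (eH _ sD)).
  move=> r dr hAr hCr.
  have [K [sK eK]] := @realize _ _ _ y2 xy yR _ r.2 dr.
  have sKG : K \subset G by rewrite -eG.
  rewrite -(surjective_pairing r) in eK.
  apply/(tr (eH _ sD) eK); apply: hu => //.
    by apply/(tr (eH _ sA) eK).
  by apply/(tr (eH _ sC) eK).
have tM (A C D : {group gT}) : A \subset G -> C \subset G -> D \subset G ->
   pi_meet G A C D -> MM N (pp A) (pp C) (pp D).
  move=> sA sC sD [_ hA hC hu]; split.
  - by apply/(tr (eH _ sD) (eH _ sA)).
  - by apply/(tr (eH _ sD) (eH _ sC)).
  move=> r dr hAr hCr.
  have [K [sK eK]] := @realize _ _ _ y2 xy yR _ r.2 dr.
  have sKG : K \subset G by rewrite -eG.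
  rewrite -(surjective_pairing r) in eK.
  apply/(tr eK (eH _ sD)); apply: hu => //.
    by apply/(tr eK (eH _ sA)).
  by apply/(tr eK (eH _ sC)).
have nE (A C : {group gT}) : A \subset G -> C \subset G -> ~ pi_eq A C -> ~ (P (pp A) =i P (pp C)).
  by move=> sA sC ne e; apply: ne => k; rewrite (eH _ sA) (eH _ sC).
apply: (@core N _ _ _ _ _ N0 (dH B) (dH X1) (dH X2) (dH X3) (dH T)).
- exact: nE _ _ s1 s2 n12.
- exact: nE _ _ s1 s3 n13.
- exact: nE _ _ s2 s3 n23.
- exact: tJ _ _ _ s1 s2 sT j12.
- exact: tJ _ _ _ s1 s3 sT j13.
- exact: tJ _ _ _ s2 s3 sT j23.
- exact: tM _ _ _ s1 s2 sB m12.
- exact: tM _ _ _ s1 s3 sB m13.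
- exact: tM _ _ _ s2 s3 sB m23.
Qed.
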